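(* Let $X\in\mathbb{R}^{n\times D}$, labels $y\in\{1,\dots,K\}^n$, sample weights $v\in\mathbb{R}^n$, and consider weighted multiclass logistic regression in variables $W\in\mathbb{R}^{D\times K}$, $b\in\mathbb{R}^K$: $$\min F(W,b)=-\sum_{i=1}^n v_i\log\hat y_{i,y_i},\qquad \hat y_{ic}=\frac{\exp\big(b_c+\sum_{k}X_{ik}W_{kc}\big)}{\sum_{l=1}^K\exp\big(b_l+\sum_kX_{ik}W_{kl}\big)}.$$ Let $\mathcal{Q}$ be a partition of $\{1,\dots,D\}$ and let $\mathcal{P}$ be the partition of $\{1,\dots,n\}$ in which $i_1,i_2$ share a color iff $\sum_{j\in T}X_{i_1j}=\sum_{j\in T}X_{i_2j}$ for all $T\in\mathcal{Q}$. Assume (1) $(\mathcal{P},\mathcal{Q})$ is equitable on $X$; (2) for every $c\in\{1,\dots,K\}$, $\sum_{i=1}^n v_iX_{ij_1}\mathbf{1}\{y_i=c\}=\sum_{i=1}^n v_iX_{ij_2}\mathbf{1}\{y_i=c\}$ whenever $j_1,j_2$ share a color of $\mathcal{Q}$; (3) $v_i$ is constant on each color of $\mathcal{P}$. Then for every $b$ and every $\hat W$ whose rows satisfy $\hat W_{j_1,\cdot}=\hat W_{j_2,\cdot}$ whenever $j_1,j_2$ share a color of $\mathcal{Q}$, we have $\frac{\partial F}{\partial W_{j_1c}}(\hat W,b)=\frac{\partial F}{\partial W_{j_2c}}(\hat W,b)$ for every class $c$ and all $j_1,j_2$ in the same color of $\mathcal{Q}$. Hence the partition of the variables $W_{jc}$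 into colors $T\times\{c\}$ ($T\in\mathcal{Q}$, $c\le K$), together with singletons for each $b_c$, is a reduction coloring.
   Context: A partition of a finite set is a set of nonempty pairwise disjoint subsets (''colors'') covering it. A pair $(\mathcal{P},\mathcal{Q})$ of partitions of the row and column indices of $A$ is equitable on $A$ if for every $S\in\mathcal{P}$, $T\in\mathcal{Q}$: $\sum_{j\in T}A_{ij}$ is the same for all $i\in S$ and $\sum_{i\in S}A_{ij}$ is the same for all $j\in T$. A reduction coloring of an unconstrained differentiable convex program $\min F(x)$ is a partition of the variables such that at every point constant on each color, the partial derivatives of $F$ with respect to variables in a common color coincide. *)

(* Defs.v *)
From mathcomp Require Import all_boot all_order all_algebra.
From mathcomp Require Import all_classical all_reals all_analysis.
Set Implicit Arguments. Unset Strict Implicit. Unset Printing Implicit Defensive.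
Import Order.TTheory GRing.Theory Num.Theory.
Local Open Scope ring_scope.

Section Defs.
Variable R : realType.

Definition equitable (m n : nat) (A : 'M[R]_(m, n))
    (P : {set {set 'I_m}}) (Q : {set {set 'I_n}}) : Prop :=
  forall S T, S \in P -> T \in Q ->
    (forall i1 i2, i1 \in S -> i2 \in S ->
        \sum_(j in T) A i1 j = \sum_(j in T) A i2 j) /\
    (forall j1 j2, j1 \in T -> j2 \in T ->
        \sum_(i in S) A i j1 = \sum_(i in S) A i j2).

Definition row_rel (n D : nat) (X : 'M[R]_(n, D)) (Q : {set {set 'I_D}}) :
    rel 'I_n :=
  fun i1 i2 => [forall T in Q, \sum_(j in T) X i1 j == \sum_(j in T) X i2 j].

Definition induced_row_partition (n D : nat) (X : 'M[R]_(n, D))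
    (Q : {set {set 'I_D}}) : {set {set 'I_n}} :=
  equivalence_partition (row_rel X Q) [set: 'I_n].

Definition yhat (n D K : nat) (X : 'M[R]_(n, D)) (W : 'M[R]_(D, K))
    (b : 'rV[R]_K) (i : 'I_n) (c : 'I_K) : R :=
  expR (b 0 c + \sum_k X i k * W k c) /
  \sum_(l < K) expR (b 0 l + \sum_k X i k * W k l).

Definition logreg_loss (n D K : nat) (X : 'M[R]_(n, D)) (y : 'I_n -> 'I_K)
    (v : 'I_n -> R) (W : 'M[R]_(D, K)) (b : 'rV[R]_K) : R :=
  - \sum_(i < n) v i * ln (yhat X W b i (y i)).

Definition partialW (D K : nat) (F : 'M[R]_(D, K) -> 'rV[R]_K -> R)
    (W : 'M[R]_(D, K)) (b : 'rV[R]_K) (j : 'I_D) (c : 'I_K) : R :=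
  derive1 (fun t : R => F (W + t *: delta_mx j c) b) 0.

End Defs.

(* Main.v *)
Require Import Defs.
From mathcomp Require Import all_boot all_order all_algebra.
From mathcomp Require Import all_classical all_reals all_analysis.
Import Order.TTheory GRing.Theory Num.Theory.
Local Open Scope ring_scope.

Lemma sumT (R : realType) (I : finType) (F : I -> R) :
  \sum_i F i = \sum_(i in [set: I]) F i.
Proof. by apply: eq_bigl => i; rewrite inE. Qed.

Section Comb.
Variables (R : realType) (n D : nat) (X : 'M[R]_(n, D)) (Q : {set {set 'I_D}}).

Lemma row_rel_equiv : equivalence_rel (row_rel X Q).
Proof.
move=> x y z; split.
  by apply/forallP => T; apply/implyP.
move=> /forallP Hxy; apply/idP/idP => /forallP H; apply/forallP => T;
  apply/implyP => TQ; move: (H T) (Hxy T); rewrite TQ /= => /eqP <- /eqP ->//.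
Qed.

Lemma inP_row_rel {S i1 i2} : S \in induced_row_partition X Q ->
  i1 \in S -> i2 \in S -> row_rel X Q i1 i2.
Proof.
move=> SP h1 h2.
have eqi : {in [set: 'I_n] & &, equivalence_rel (row_rel X Q)}.
  by move=> x y z _ _ _; apply: row_rel_equiv.
have [_ tiP _] := and3P (equivalence_partitionP eqi).
rewrite -(pblock_equivalence_partition eqi) ?inE //.
by rewrite (def_pblock tiP SP h1).
Qed.

Lemma part_sum (g : 'I_n -> R) j1 j2 T :
  finset.partition Q [set: 'I_D] ->
  equitable X (induced_row_partition X Q) Q ->
  (forall S i1 i2, S \in induced_row_partition X Q -> i1 \in S -> i2 \in S -> g i1 = g i2) ->
  T \in Q -> j1 \in T -> j2 \in T ->
  \sum_i g i * X i j1 = \sum_i g i * X i j2.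
Proof.
move=> _ Heq Hg TQ h1 h2.
have eqi : {in [set: 'I_n] & &, equivalence_rel (row_rel X Q)}.
  by move=> x y z _ _ _; apply: row_rel_equiv.
have /and3P [/eqP cP tiP _] := equivalence_partitionP eqi.
rewrite !sumT -cP !finset.big_trivIset //.
apply: eq_bigr => S SP.
case: (set_0Vmem S) => [->|[i0 hi0]]; first by rewrite !big_set0.
rewrite (eq_bigr (fun i => g i0 * X i j1)); last by move=> i iS; rewrite (Hg S i i0).
rewrite [RHS](eq_bigr (fun i => g i0 * X i j2)); last by move=> i iS; rewrite (Hg S i i0).
rewrite -!mulr_sumr; congr (_ * _).
by have [_ H] := Heq S T SP TQ; apply: H.
Qed.

Lemma row_W_sum (K : nat) (W : 'M[R]_(D, K)) S i1 i2 (l : 'I_K) :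
  finset.partition Q [set: 'I_D] ->
  (forall (T : {set 'I_D}) (j1 j2 : 'I_D) (c : 'I_K),
        T \in Q -> j1 \in T -> j2 \in T -> W j1 c = W j2 c) ->
  S \in induced_row_partition X Q -> i1 \in S -> i2 \in S ->
  \sum_k X i1 k * W k l = \sum_k X i2 k * W k l.
Proof.
move=> /and3P [/eqP cQ tiQ _] HW SP h1 h2.
have /forallP rr := inP_row_rel SP h1 h2.
rewrite !sumT -cQ !finset.big_trivIset //.
apply: eq_bigr => T TQ.
case: (set_0Vmem T) => [->|[k0 hk0]]; first by rewrite !big_set0.
rewrite (eq_bigr (fun k => X i1 k * W k0 l)); last by move=> k kT; rewrite (HW T k k0).
rewrite [RHS](eq_bigr (fun k => X i2 k * W k0 l)); last by move=> k kT; rewrite (HW T k k0).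
rewrite -!mulr_suml; congr (_ * _).
by move: (rr T); rewrite TQ => /eqP.
Qed.
End Comb.
Section A.
Variable R : realType.

Lemma der_lin (a b x : R) : is_derive x 1 (fun t => a + t * b) b.
Proof.
have -> : (fun t => a + t * b) = cst a + b \*: id.
  by apply/funext => t /=; rewrite mulrC.
have H := is_deriveD (is_derive_cst a x 1) (is_deriveZ b (is_derive_id x (1:R))).
by rewrite add0r /GRing.scale /= mulr1 in H.
Qed.

Lemma der_explin (a b x : R) : is_derive x 1 (fun t => expR (a + t * b)) (expR (a + x * b) * b).
Proof.
have -> : (fun t => expR (a + t * b)) = expR \o (fun t => a + t * b) by [].
apply: is_derive1_comp; last exact: der_lin.
Qed.

Lemma der_sum (K : nat) (f : 'I_K -> R -> R) (df : 'I_K -> R) (x : R) :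
  (forall l, is_derive x 1 (f l) (df l)) ->
  is_derive x 1 (fun t => \sum_l f l t) (\sum_l df l).
Proof.
move=> H.
have -> : (fun t => \sum_l f l t) = \sum_l f l.
  by apply/funext => t; rewrite fct_sumE.
exact: is_derive_sum.
Qed.

Lemma der_lse (K : nat) (a b : 'I_K -> R) (x : R) :
  0 < \sum_l expR (a l + x * b l) ->
  is_derive x 1 (fun t => ln (\sum_l expR (a l + t * b l)))
    ((\sum_l expR (a l + x * b l))^-1 * \sum_l (expR (a l + x * b l) * b l)).
Proof.
move=> Hp.
have -> : (fun t => ln (\sum_l expR (a l + t * b l))) =
   (@ln R) \o (fun t => \sum_l expR (a l + t * b l)) by [].
apply: is_derive1_comp; last by apply: der_sum => l; exact: der_explin.
exact: is_derive1_ln.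
Qed.
End A.

Lemma sum_pos (R : realType) (K : nat) (l0 : 'I_K) (f : 'I_K -> R) :
  (forall l, 0 < f l) -> 0 < \sum_l f l.
Proof.
move=> H; rewrite (bigD1 l0) //=; apply: (lt_le_trans (H l0)).
rewrite lerDl; apply: sumr_ge0 => l _; exact: ltW.
Qed.

Section Main.
Variables (R : realType) (n D K : nat) (X : 'M[R]_(n, D)) (y : 'I_n -> 'I_K)
  (v : 'I_n -> R) (W : 'M[R]_(D, K)) (b : 'rV[R]_K).

Let z i l := b 0 l + \sum_k X i k * W k l.

Lemma shift_sum j c t i l :
  \sum_k X i k * (W + t *: delta_mx j c) k l =
  \sum_k X i k * W k l + t * (X i j * (l == c)%:R).
Proof.
under eq_bigr => k _ do rewrite !mxE mulrDr.
rewrite big_split /=; congr (_ + _).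
rewrite (bigD1 j) //= big1 ?addr0; first by rewrite eqxx /= mulrCA.
by move=> k /negPf ->; rewrite /= mulr0 mulr0.
Qed.

Lemma loss_eq j c t :
  logreg_loss X y v (W + t *: delta_mx j c) b =
  \sum_i (v i * ln (\sum_l expR (z i l + t * (X i j * (l == c)%:R))) -
          v i * (z i (y i) + t * (X i j * (y i == c)%:R))).
Proof.
rewrite /logreg_loss /yhat -sumrN; apply: eq_bigr => i _.
rewrite /= shift_sum.
under eq_bigr => l _ do rewrite shift_sum addrA.
rewrite addrA ln_div ?posrE ?expR_gt0 //; last first.
  by apply: (@sum_pos _ _ (y i)) => l; exact: expR_gt0.
by rewrite expRK /z mulrBr opprB.
Qed.

Lemma der_term (vv a0 b0 : R) (a bb : 'I_K -> R) x :
  0 < \sum_l expR (a l + x * bb l) ->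
  is_derive x 1 (fun t => vv * ln (\sum_l expR (a l + t * bb l)) - vv * (a0 + t * b0))
    (vv * ((\sum_l expR (a l + x * bb l))^-1 * \sum_l (expR (a l + x * bb l) * bb l)) - vv * b0).
Proof.
move=> Hp.
have -> : (fun t => vv * ln (\sum_l expR (a l + t * bb l)) - vv * (a0 + t * b0)) =
  (vv \*: (fun t => ln (\sum_l expR (a l + t * bb l)))) - (vv \*: (fun t => a0 + t * b0)) by [].
apply: is_deriveB; apply: is_deriveZ; [exact: der_lse | exact: der_lin].
Qed.

Lemma partialW_eq j c : partialW (logreg_loss X y v) W b j c =
  \sum_i (v i * ((\sum_l expR (z i l))^-1 * expR (z i c)) * X i j) -
  \sum_i v i * X i j * (y i == c)%:R.
Proof.
rewrite /partialW.
have -> : (fun t => logreg_loss X y v (W + t *: delta_mx j c) b) = fun t =>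
  \sum_i (v i * ln (\sum_l expR (z i l + t * (X i j * (l == c)%:R))) -
          v i * (z i (y i) + t * (X i j * (y i == c)%:R))).
  by apply/funext => t; exact: loss_eq.
have HD := @der_sum R n _ _ 0 (fun i => @der_term (v i) (z i (y i)) (X i j * (y i == c)%:R)
   (z i) (fun l => X i j * (l == c)%:R) 0
   (@sum_pos _ _ (y i) _ (fun l => expR_gt0 _))).
rewrite derive1E; have [_ ->] := HD.
rewrite -sumrB; apply: eq_bigr => i _.
under eq_bigr => l _ do rewrite mul0r addr0.
under [X in _^-1 * X]eq_bigr => l _ do rewrite mul0r addr0.
rewrite [X in _^-1 * X](bigD1 c) //= [\sum_(l < K | l != c) _]big1 ?addr0; last by move=> l /negPf ->; rewrite mulr0 mulr0.
by rewrite eqxx mulr1 !mulrA.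
Qed.
End Main.

Theorem theorem5 (R : realType) (n D K : nat) (X : 'M[R]_(n, D))
    (y : 'I_n -> 'I_K) (v : 'I_n -> R) (Q : {set {set 'I_D}}) :
  finset.partition Q [set: 'I_D] ->
  equitable X (induced_row_partition X Q) Q ->
  (forall (c : 'I_K) (T : {set 'I_D}) (j1 j2 : 'I_D),
      T \in Q -> j1 \in T -> j2 \in T ->
      \sum_(i < n) v i * X i j1 * (y i == c)%:R =
      \sum_(i < n) v i * X i j2 * (y i == c)%:R) ->
  (forall (S : {set 'I_n}) (i1 i2 : 'I_n),
      S \in induced_row_partition X Q -> i1 \in S -> i2 \in S -> v i1 = v i2) ->
  forall (b : 'rV[R]_K) (W : 'M[R]_(D, K)),
    (forall (T : {set 'I_D}) (j1 j2 : 'I_D) (c : 'I_K),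
        T \in Q -> j1 \in T -> j2 \in T -> W j1 c = W j2 c) ->
    forall (T : {set 'I_D}) (j1 j2 : 'I_D) (c : 'I_K),
      T \in Q -> j1 \in T -> j2 \in T ->
      partialW (logreg_loss X y v) W b j1 c = partialW (logreg_loss X y v) W b j2 c.
Proof.
move=> HQ Heq Hy Hv b W HW T j1 j2 c TQ h1 h2.
rewrite !partialW_eq (Hy c T j1 j2 TQ h1 h2); congr (_ - _).
apply: (@part_sum R n D X Q _ j1 j2 T HQ Heq _ TQ h1 h2).
move=> S i1 i2 SP e1 e2 /=.
have Hz : forall l, \sum_k X i1 k * W k l = \sum_k X i2 k * W k l.
  by move=> l; exact: (@row_W_sum R n D X Q K W S i1 i2 l HQ HW SP e1 e2).
rewrite (Hv S i1 i2) // Hz.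
by under eq_bigr => l _ do rewrite Hz.
Qed.
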